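(* Let $T>0$ and constants $K_1\ge0$, $K_2\ne0$ with $K_1+K_2\ge0$. For $t\in[0,T]$ let $$\Lambda(t,T)=1+\frac{K_1}{K_2}\Big(1-e^{-\frac{K_2(T-t)}{2}}\Big)+\frac{K_1}{K_2}\Big(1-e^{-\frac{K_2t}{2}}\Big)+\Big(\frac{K_1}{K_2}\Big)^2\Big[\Big(1-e^{-\frac{K_2t}{2}}\Big)+\frac12\Big(e^{-\frac{K_2(T+t)}{2}}-e^{-\frac{K_2(T-t)}{2}}\Big)\Big].$$ (i) If $K_2<0$, then $t\mapsto\Lambda(t,T)$ is strictly increasing on $[0,T]$. (ii) If $K_2>0$, then the maximum of $t\mapsto\Lambda(t,T)$ over $[0,T]$ is attained at a point $t_0\in(0,T)$. *)

(* Defs.v *)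
From Stdlib Require Import Reals.
Open Scope R_scope.

Definition Lambda (K1 K2 T t : R) : R :=
  let c := K1 / K2 in
  1 + c * (1 - exp (- (K2 * (T - t) / 2)))
    + c * (1 - exp (- (K2 * t / 2)))
    + c ^ 2 * ((1 - exp (- (K2 * t / 2)))
               + / 2 * (exp (- (K2 * (T + t) / 2)) - exp (- (K2 * (T - t) / 2)))).

(* Main.v *)
Require Import Defs.
From Stdlib Require Import Reals Lra Psatz.
From Coquelicot Require Import Coquelicot.
Open Scope R_scope.

Definition DL K1 K2 T t :=
  let a := exp (-(K2*t/2)) in let b := exp (-(K2*(T-t)/2)) in
  let e3 := exp (- (K2 * (T + t) / 2)) in
  K1/2 * ((a - b) + K1/K2*a - K1/K2/2*(e3 + b)).

Lemma dL K1 K2 T t : K2 <> 0 -> derivable_pt_lim (Lambda K1 K2 T) t (DL K1 K2 T t).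
Proof. intro h. apply is_derive_Reals. unfold Lambda, DL.
  auto_derive; [easy|]. unfold Rminus, Rdiv. field. auto. Qed.

Lemma DL_eq K1 K2 T t : DL K1 K2 T t =
  let a := exp (-(K2*t/2)) in let b := exp (-(K2*(T-t)/2)) in
  K1/2 * ((a - b) + K1/K2*a - K1/K2/2*(a*a*b + b)).
Proof.
  unfold DL. cbv zeta.
  replace (exp (- (K2 * (T + t) / 2))) with
    (exp (-(K2*t/2)) * exp (-(K2*t/2)) * exp (-(K2*(T-t)/2))); [reflexivity|].
  rewrite <- !exp_plus. f_equal. field.
Qed.

Lemma exp_ge1 x : 0 <= x -> 1 <= exp x.
Proof. intro h. destruct (Req_dec x 0) as [->|hn]. rewrite exp_0; lra.
  rewrite <- exp_0. left. apply exp_increasing. lra. Qed.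

Lemma exp_gt1 x : 0 < x -> 1 < exp x.
Proof. intro h. rewrite <- exp_0. apply exp_increasing. lra. Qed.

Lemma exp_lt1 x : x < 0 -> exp x < 1.
Proof. intro h. rewrite <- exp_0. apply exp_increasing. lra. Qed.

Lemma loc_right f x l y : derivable_pt_lim f x l -> 0 < l -> x < y ->
  exists t, x < t < y /\ f x < f t.
Proof.
  intros H hl hxy. destruct (H (l/2)) as [d Hd]; [lra|].
  set (h := Rmin (d/2) ((y-x)/2)).
  assert (hp : 0 < h). { unfold h. apply Rmin_pos; destruct d; simpl; lra. }
  assert (h1 : h <= d/2) by apply Rmin_l.
  assert (h2 : h <= (y-x)/2) by apply Rmin_r.
  assert (hd := cond_pos d).
  specialize (Hd h ltac:(lra) ltac:(rewrite Rabs_right; lra)).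
  apply Rabs_def2 in Hd. destruct Hd as [Ha Hb].
  set (q := (f (x + h) - f x) / h) in *.
  assert (Hq : f (x+h) - f x = q * h) by (unfold q; field; lra).
  exists (x+h). split. lra. nra.
Qed.

Lemma loc_left f x l y : derivable_pt_lim f x l -> l < 0 -> y < x ->
  exists t, y < t < x /\ f x < f t.
Proof.
  intros H hl hxy. destruct (H (-l/2)) as [d Hd]; [lra|].
  set (h := Rmin (d/2) ((x-y)/2)).
  assert (hp : 0 < h). { unfold h. apply Rmin_pos; destruct d; simpl; lra. }
  assert (h1 : h <= d/2) by apply Rmin_l.
  assert (h2 : h <= (x-y)/2) by apply Rmin_r.
  assert (hd := cond_pos d).
  specialize (Hd (-h) ltac:(lra) ltac:(rewrite Rabs_left; lra)).
  apply Rabs_def2 in Hd. destruct Hd as [Ha Hb].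
  set (q := (f (x + - h) - f x) / - h) in *.
  assert (Hq : f (x+ - h) - f x = q * - h) by (unfold q; field; lra).
  exists (x+ - h). split. lra. nra.
Qed.

Theorem proposition1 (T K1 K2 : R) (hT : 0 < T) (hK1 : 0 <= K1) (hK2 : K2 <> 0)
  (hK12 : 0 <= K1 + K2) :
  (K2 < 0 ->
     forall s t, 0 <= s -> s < t -> t <= T -> Lambda K1 K2 T s < Lambda K1 K2 T t) /\
  (0 < K2 ->
     exists t0, 0 < t0 /\ t0 < T /\
       forall t, 0 <= t -> t <= T -> Lambda K1 K2 T t <= Lambda K1 K2 T t0).
Proof.
  split.
  - intros hneg s t hs hst htT.
    assert (hc : K1 / K2 <= -1).
    { assert (e : K1 / K2 * K2 = K1) by (field; auto). nra. }
    destruct (MVT_cor2 (Lambda K1 K2 T) (DL K1 K2 T) s t hst) as [c [Hc Hr]].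
    { intros; apply dL; auto. }
    assert (Dp : 0 < DL K1 K2 T c).
    { rewrite DL_eq. cbv zeta.
      set (a := exp (-(K2*c/2))). set (b := exp (-(K2*(T-c)/2))).
      set (m := K1 / K2) in *.
      assert (ha : 1 < a) by (unfold a; apply exp_gt1; nra).
      assert (hb : 1 <= b) by (unfold b; apply exp_ge1; nra).
      assert (f1 : 0 < b * (a*a - 1)) by (apply Rmult_lt_0_compat; nra).
      assert (f2 : 0 <= (-m - 1) * ((b-1)*(a*a+1) + (a-1)*(a-1))) by (apply Rmult_le_pos; nra).
      assert (g : 0 < a - b + m * a - m / 2 * (a * a * b + b)) by nra.
      nra. }
    nra.
  - intros hpos.
    destruct (Req_dec K1 0) as [h0|h0].
    + exists (T/2). split; [lra|]. split; [lra|]. intros.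
      unfold Lambda. subst K1. replace (0/K2) with 0 by (field; auto). lra.
    + assert (hc : 0 < K1 / K2) by (apply Rdiv_lt_0_compat; lra).
      set (m := K1 / K2) in *.
      destruct (continuity_ab_maj (Lambda K1 K2 T) 0 T) as [M [HM HMr]]; [lra| |].
      { intros. apply derivable_continuous_pt. exists (DL K1 K2 T c). apply dL; auto. }
      set (E := exp (-(K2*T/2))).
      assert (hE0 : 0 < E) by apply exp_pos.
      assert (hE1 : E < 1) by (unfold E; apply exp_lt1; nra).
      assert (D0 : 0 < DL K1 K2 T 0).
      { rewrite DL_eq. cbv zeta.
        replace (-(K2*0/2)) with 0 by field. rewrite exp_0.
        replace (-(K2*(T-0)/2)) with (-(K2*T/2)) by field. fold E. fold m.
        assert (0 < (1 - E) * (1 + m)) by (apply Rmult_lt_0_compat; lra).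
        apply Rmult_lt_0_compat; [lra|]. nra. }
      assert (DT : DL K1 K2 T T < 0).
      { rewrite DL_eq. cbv zeta.
        replace (-(K2*(T-T)/2)) with 0 by field. rewrite exp_0. fold E. fold m.
        assert (0 < m * ((E-1)*(E-1))) by (apply Rmult_lt_0_compat; nra).
        assert (K1/2 > 0) by lra.
        assert (E - 1 + m * E - m / 2 * (E * E * 1 + 1) < 0) by nra.
        nra. }
      exists M. split; [|split]; auto.
      * destruct (Req_dec M 0) as [e|e]; [|lra].
        destruct (loc_right _ _ _ T (dL K1 K2 T 0 hK2) D0 hT) as [t [ht hl]].
        specialize (HM t ltac:(lra)). rewrite e in HM. lra.
      * destruct (Req_dec M T) as [e|e]; [|lra].
        destruct (loc_left _ _ _ 0 (dL K1 K2 T T hK2) DT hT) as [t [ht hl]].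
        specialize (HM t ltac:(lra)). rewrite e in HM. lra.
Qed.
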